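(* Let $p(z)$ be an admissible polynomial of degree at most $n-1$ and let $L(p(z))\subset S$ be the saturated segment ideal with respect to the lex order with Hilbert polynomial $p(z)$. Then $L(p(z))$ is a gen-segment ideal with respect to the revlex order if and only if $\deg p(z)\le1$ or $L(p(z))$ has at most two minimal generators of degree $>1$.
   Context: $S=K[x_0,\dots,x_n]$, $K$ algebraically closed of characteristic $0$, standard grading, $x_0<x_1<\dots<x_n$; $\mathbb T_t$ is the set of terms of degree $t$. Lex order: for terms of the same degree, $x^\alpha\prec x^\beta$ iff $\alpha_k<\beta_k$ where $k=\max\{i:\alpha_i\ne\beta_i\}$. Revlex order: $x^\alpha\prec x^\beta$ iff $\alpha_h>\beta_h$ where $h=\min\{i:\alpha_i\neq\beta_i\}$. Given a term order, $B\subseteq\mathbb T_t$ is a segment if $\tau\in B$, $\tau'\in\mathbb T_t$, $\tau'\succ\tau$ imply $\tau'\in B$; a monomial ideal is a segment ideal if all its degree components are segments. For every admissible polynomial $p(z)$ of degree $\le n-1$ there is a unique saturated lex segment ideal $L(p(z))$ with Hilbert polynomial $p(z)$. A nonzero saturated Borel ideal $I$ is a gen-segment ideal w.r.t. $\preceq$ if for every $s$, whenever $\tau$ is a minimal monomial generator of degree $s$ and $\tau'\in\mathbb T_s$ is not in the ideal generated by $I_{s-1}$ with $\tau'\succ\tau$, then $\tau'$ is also a minimal generator of $I$. *)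

(* Defs.v *)
(* Monomial ideals of S = K[x_0,...,x_n] are modelled
   combinatorially as sets of exponent vectors closed under divisibility. *)
From HB Require Import structures.
From mathcomp Require Import all_boot all_order all_algebra.
Set Implicit Arguments. Unset Strict Implicit. Unset Printing Implicit Defensive.
Import Order.TTheory GRing.Theory Num.Theory.

Definition term (n : nat) := {ffun 'I_n.+1 -> nat}.

Definition tdeg n (a : term n) : nat := \sum_i a i.

Definition tmul n (a b : term n) : term n := [ffun i => a i + b i].

Definition tdvd n (a b : term n) : Prop := forall i, a i <= b i.

Definition monset (n : nat) := term n -> bool.

Definition is_monideal n (I : monset n) : Prop :=
  forall a b : term n, tdvd a b -> I a -> I b.

Definition nonzero_ideal n (I : monset n) : Prop := exists a, I a.

(* saturation w.r.t. the irrelevant ideal (x_0,...,x_n):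
   tau in I^sat iff tau * m^k subset I for some k *)
Definition saturated n (I : monset n) : Prop :=
  forall a : term n,
    (exists k, forall b : term n, tdeg b = k -> I (tmul a b)) -> I a.

(* Borel ideal (char 0: Borel-fixed = strongly stable), with x_0<...<x_n:
   x^a in I, x_j | x^a, j < i  ==>  x^a x_i / x_j in I *)
Definition incr n (a : term n) (i : 'I_n.+1) : term n :=
  [ffun k => if k == i then (a k).+1 else a k].
Definition decr n (a : term n) (j : 'I_n.+1) : term n :=
  [ffun k => if k == j then (a k).-1 else a k].

Definition borel n (I : monset n) : Prop :=
  forall (a : term n) (i j : 'I_n.+1),
    I a -> 0 < a j -> (j < i)%N -> I (incr (decr a j) i).

(* Hilbert function of S/I in degree t: number of terms of degree t not in I *)
Definition hilbf n (I : monset n) (t : nat) : nat :=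
  #|[set a : {ffun 'I_n.+1 -> 'I_t.+1} |
      ((\sum_i (a i : nat)) == t) && ~~ I [ffun i => (a i : nat)]]|.

Definition hilbpoly n (I : monset n) (P : {poly rat}) : Prop :=
  exists t0, forall t, (t0 <= t)%N -> (P.[t%:R] = (hilbf I t)%:R)%R.

Definition lex_lt n (a b : term n) : Prop :=
  exists k : 'I_n.+1, a k < b k /\ forall i : 'I_n.+1, (k < i)%N -> a i = b i.

Definition revlex_lt n (a b : term n) : Prop :=
  exists h : 'I_n.+1, b h < a h /\ forall i : 'I_n.+1, (i < h)%N -> a i = b i.

Definition segment_ideal n (lt : term n -> term n -> Prop) (I : monset n) : Prop :=
  is_monideal I /\
  forall a b : term n, tdeg a = tdeg b -> I a -> lt a b -> I b.

Definition in_gen_prev n (I : monset n) (a : term n) : Prop :=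
  exists b : term n, I b /\ (tdeg b).+1 = tdeg a /\ tdvd b a.

Definition mingen n (I : monset n) (a : term n) : Prop :=
  I a /\ ~ in_gen_prev I a.

Definition gen_segment n (lt : term n -> term n -> Prop) (I : monset n) : Prop :=
  [/\ is_monideal I, nonzero_ideal I, saturated I, borel I &
   forall (s : nat) (tau tau' : term n),
     mingen I tau -> tdeg tau = s -> tdeg tau' = s ->
     ~ in_gen_prev I tau' -> lt tau tau' -> mingen I tau'].

Definition at_most_two_mingens_deg_gt1 n (I : monset n) : Prop :=
  ~ exists a b c : term n,
      [/\ mingen I a, mingen I b, mingen I c,
          (1 < tdeg a)%N /\ (1 < tdeg b)%N /\ (1 < tdeg c)%N &
          a <> b /\ a <> c /\ b <> c].

(* Main.v *)
Require Import Defs.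
From HB Require Import structures.
From mathcomp Require Import all_boot all_order all_algebra.
From Stdlib Require Import Classical.
Set Implicit Arguments. Unset Strict Implicit. Unset Printing Implicit Defensive.
Import Order.TTheory GRing.Theory Num.Theory.

Definition mono n (i : 'I_n.+1) (c : nat) : term n := [ffun j => if j == i then c else 0%N].

Lemma monoE n (i j : 'I_n.+1) c : mono i c j = if j == i then c else 0%N.
Proof. by rewrite ffunE. Qed.

Lemma tdeg_mono n (i : 'I_n.+1) c : tdeg (mono i c) = c.
Proof.
rewrite /tdeg (bigD1 i) //= big1 ?addn0 ?monoE ?eqxx // => j /negPf Hj.
by rewrite monoE Hj.
Qed.

Lemma tdeg_tmul n (a b : term n) : tdeg (tmul a b) = (tdeg a + tdeg b)%N.
Proof. by rewrite /tdeg -big_split; apply: eq_bigr => i _; rewrite ffunE. Qed.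

Lemma tmulE n (a b : term n) i : tmul a b i = (a i + b i)%N.
Proof. by rewrite ffunE. Qed.

Lemma tdvd_refl n (a : term n) : tdvd a a.
Proof. by move=> i. Qed.

Lemma tdvd_trans n (a b c : term n) : tdvd a b -> tdvd b c -> tdvd a c.
Proof. by move=> H1 H2 i; apply: leq_trans (H1 i) (H2 i). Qed.

Lemma tdeg_le1 n (a : term n) i : (a i <= tdeg a)%N.
Proof. by rewrite /tdeg (bigD1 i) //= leq_addr. Qed.

Lemma tdeg_le2 n (a : term n) i j : i != j -> (a i + a j <= tdeg a)%N.
Proof.
move=> Hij; rewrite /tdeg (bigD1 i) //= leq_add2l (bigD1 j) /=; last by rewrite eq_sym.
exact: leq_addr.
Qed.

Lemma tdeg_le3 n (a : term n) i j k : i != j -> i != k -> j != k ->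
  (a i + a j + a k <= tdeg a)%N.
Proof.
move=> Hij Hik Hjk; rewrite /tdeg (bigD1 i) //= -addnA leq_add2l (bigD1 j) /=;
  last by rewrite eq_sym.
rewrite leq_add2l (bigD1 k) /=; last by rewrite [k == i]eq_sym Hik [k == j]eq_sym Hjk.
exact: leq_addr.
Qed.

Lemma deg_lt n (a b : term n) h :
  (forall i, b i <= a i)%N -> (b h < a h)%N -> (tdeg b < tdeg a)%N.
Proof.
move=> H Hh; rewrite /tdeg (bigD1 h) //= [X in (_ < X)%N](bigD1 h) //=.
rewrite -addSn; apply: leq_add => //; exact: leq_sum.
Qed.

Lemma deg_exists n (a b : term n) (h : 'I_n.+1) :
  tdeg a = tdeg b -> (forall i : 'I_n.+1, (i < h)%N -> a i = b i) -> (b h < a h)%N ->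
  exists i : 'I_n.+1, (h < i)%N /\ (a i < b i)%N.
Proof.
move=> Hd Hb Hh; apply: NNPP => Hn.
have : (tdeg b < tdeg a)%N.
  apply: (deg_lt (h:=h)) => // i.
  case: (ltngtP i h) => [/Hb -> //|Hi|/val_inj -> ]; last exact: ltnW.
  rewrite leqNgt; apply/negP => Hi2; apply: Hn; by exists i.
by rewrite Hd ltnn.
Qed.

Lemma deg0 n (a : term n) : tdeg a = 0%N -> forall i, a i = 0%N.
Proof. by move=> H i; apply/eqP; rewrite -leqn0 -H tdeg_le1. Qed.

Lemma exists_pos n (a : term n) : (0 < tdeg a)%N -> exists i, (0 < a i)%N.
Proof.
move=> H; apply: NNPP => Hn.
have : tdeg a = 0%N.
  rewrite /tdeg big1 // => i _; apply/eqP; rewrite -leqn0 leqNgt; apply/negP => Hi.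
  by apply: Hn; exists i.
by move=> E; rewrite E in H.
Qed.

Lemma top_exists n (a : term n) : (0 < tdeg a)%N ->
  exists w : 'I_n.+1, (0 < a w)%N /\ forall i : 'I_n.+1, (w < i)%N -> a i = 0%N.
Proof.
move=> /exists_pos [i0 Hi0].
case: (@arg_maxnP _ i0 (fun i => 0 < a i)%N (fun i => nat_of_ord i) Hi0) => w Hw Hmax.
exists w; split => // i Hi; apply/eqP; rewrite -leqn0 leqNgt; apply/negP => Hp.
by have /= := Hmax i Hp; rewrite leqNgt Hi.
Qed.

Lemma bot_exists n (a : term n) : (0 < tdeg a)%N ->
  exists v : 'I_n.+1, (0 < a v)%N /\ forall i : 'I_n.+1, (i < v)%N -> a i = 0%N.
Proof.
move=> /exists_pos [i0 Hi0].
case: (@arg_minnP _ i0 (fun i => 0 < a i)%N (fun i => nat_of_ord i) Hi0) => w Hw Hmin.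
exists w; split => // i Hi; apply/eqP; rewrite -leqn0 leqNgt; apply/negP => Hp.
by have /= := Hmin i Hp; rewrite leqNgt Hi.
Qed.

Lemma x0free n (L : monset n) :
  segment_ideal (@lex_lt n) L -> saturated L ->
  forall a c, L (tmul a (mono ord0 c)) -> L a.
Proof.
move=> [Hid Hseg] Hsat a c Hac; apply: Hsat; exists c => b Hb.
case: (boolP [exists j : 'I_n.+1, (0 < j)%N && (0 < b j)%N]).
- move=> /existsP [j /andP [Hj0 Hbj]].
  have Hdb : (0 < tdeg b)%N by apply: leq_trans Hbj (tdeg_le1 _ _).
  have [w [Hw Htop]] := top_exists Hdb.
  have Hjw : (j <= w)%N by rewrite leqNgt; apply/negP => /Htop; move: Hbj => /[swap] ->.
  have Hw0 : w != ord0 by apply/negP => /eqP E; move: (leq_trans Hj0 Hjw); rewrite E.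
  apply: (Hseg _ _ _ Hac); first by rewrite !tdeg_tmul tdeg_mono Hb.
  exists w; split.
  + by rewrite !tmulE monoE (negPf Hw0) addn0 -{1}[a w]addn0 ltn_add2l.
  + move=> i Hi; rewrite !tmulE monoE Htop //.
    have -> : (i == ord0) = false by apply/negP => /eqP E; rewrite E in Hi.
    done.
- rewrite negb_exists => /forallP Hall.
  suff -> : b = mono ord0 c by [].
  have Hz : forall j : 'I_n.+1, j != ord0 -> b j = 0%N.
    move=> j Hj; have := Hall j.
    have -> : (0 < j)%N by case: j Hj => [[|k] Hk] //=.
    by rewrite /= -leqNgt leqn0 => /eqP.
  apply/ffunP => j; rewrite monoE; case: eqP => [->|/eqP Hj]; last exact: Hz.
  rewrite -Hb /tdeg (bigD1 ord0) //= big1 ?addn0 // => i; exact: Hz.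
Qed.

Lemma seg_id n (L : monset n) : segment_ideal (@lex_lt n) L -> is_monideal L.
Proof. by case. Qed.

Lemma F1 n (L : monset n) :
  segment_ideal (@lex_lt n) L -> saturated L ->
  forall (mu : term n) (w : nat) (j : 'I_n.+1), L mu -> (0 < tdeg mu)%N ->
  (forall i : 'I_n.+1, (w < i)%N -> mu i = 0%N) -> (w < j)%N -> L (mono j 1).
Proof.
move=> Hs Hsat mu w j Hmu Hd Hz Hwj.
apply: (x0free Hs Hsat (c := (tdeg mu).-1)).
case: Hs => Hid Hseg; apply: (Hseg mu) => //.
  by rewrite tdeg_tmul !tdeg_mono add1n prednK.
have Hj0 : (j == ord0) = false by apply/negP => /eqP E; rewrite E in Hwj.
exists j; split.
  by rewrite Hz // tmulE !monoE eqxx.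
move=> i Hi; rewrite tmulE !monoE Hz ?(leq_trans Hwj (ltnW Hi)) //.
have -> : (i == j) = false by apply/negP => /eqP E; rewrite E ltnn in Hi.
have -> : (i == ord0) = false by apply/negP => /eqP E; rewrite E in Hi.
done.
Qed.

Lemma mono_dvd n (j : 'I_n.+1) (a : term n) : (0 < a j)%N -> tdvd (mono j 1) a.
Proof. by move=> H i; rewrite monoE; case: eqP => [->|]. Qed.

Lemma decrE n (a : term n) j i : decr a j i = if i == j then (a i).-1 else a i.
Proof. by rewrite ffunE. Qed.

Lemma tdeg_decr n (a : term n) j : (0 < a j)%N -> (tdeg (decr a j)).+1 = tdeg a.
Proof.
move=> H; rewrite /tdeg (bigD1 j) //= [in RHS](bigD1 j) //= decrE eqxx -addSn prednK //.
congr (_ + _)%N; apply: eq_bigr => i /negPf Hi; by rewrite decrE Hi.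
Qed.

Lemma decr_dvd n (a : term n) j : tdvd (decr a j) a.
Proof. by move=> i; rewrite decrE; case: eqP => // _; exact: leq_pred. Qed.

Lemma mingen_dvd_eq n (L : monset n) (tau g : term n) :
  is_monideal L -> mingen L tau -> L g -> tdvd g tau -> g = tau.
Proof.
move=> Hid [Ht Hng] Hg Hgt; apply: NNPP => Hne.
have [i Hi] : exists i, g i != tau i.
  apply: NNPP => Hn; apply: Hne; apply/ffunP => i; apply/eqP; apply: NNPP => H.
  by apply: Hn; exists i; apply/negP.
have Hlt : (g i < tau i)%N by rewrite ltn_neqAle Hi Hgt.
apply: Hng; exists (decr tau i); split; [|split].
- apply: (Hid g) => // k; rewrite decrE; case: eqP => [->|_]; last exact: Hgt.
  by rewrite -ltnS prednK // (leq_ltn_trans _ Hlt).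
- apply: tdeg_decr; exact: leq_ltn_trans _ Hlt.
- exact: decr_dvd.
Qed.

Lemma mingen_exists n (L : monset n) (a : term n) :
  L a -> exists g, mingen L g /\ tdvd g a.
Proof.
move=> Ha; have [d Hd] : exists d, (tdeg a < d)%N by exists (tdeg a).+1.
elim: d a Hd Ha => [//|d IH] a Hd Ha.
case: (classic (in_gen_prev L a)) => [[b [Hb [Hbd Hba]]]|Hn].
  have Hbl : (tdeg b < d)%N by rewrite ltnS -Hbd in Hd.
  have [g [Hg Hgb]] := IH b Hbl Hb.
  by exists g; split => //; apply: tdvd_trans Hgb Hba.
by exists a; split => //; exact: tdvd_refl.
Qed.

Lemma mingen_x0 n (L : monset n) :
  segment_ideal (@lex_lt n) L -> saturated L ->
  forall tau, mingen L tau -> tau ord0 = 0%N.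
Proof.
move=> Hs Hsat tau [Ht Hng]; apply/eqP; rewrite -leqn0 leqNgt; apply/negP => H0.
apply: Hng; exists (decr tau ord0); split; [|split].
- apply: (x0free Hs Hsat (c := 1)).
  suff -> : tmul (decr tau ord0) (mono ord0 1) = tau by [].
  apply/ffunP => i; rewrite tmulE decrE monoE; case: eqP => [->|]; last by rewrite addn0.
  by rewrite addn1 prednK.
- exact: tdeg_decr.
- exact: decr_dvd.
Qed.

Lemma shiftX n (L : monset n) :
  segment_ideal (@lex_lt n) L -> saturated L ->
  forall (mu : term n) (w u : 'I_n.+1), L mu ->
  (forall i : 'I_n.+1, (w < i)%N -> mu i = 0%N) -> u != w -> (0 < mu u)%N ->
  L (mono w (mu w).+1).
Proof.
move=> Hs Hsat mu w u Hmu Hz Huw Hu.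
have Hle : ((mu w).+1 <= tdeg mu)%N.
  have Hwu : w != u by rewrite eq_sym.
  apply: leq_trans (tdeg_le2 mu Hwu); by rewrite -addn1 leq_add2l.
apply: (x0free Hs Hsat (c := (tdeg mu - (mu w).+1)%N)).
case: Hs => Hid Hseg; apply: (Hseg mu) => //.
  by rewrite tdeg_tmul !tdeg_mono subnKC.
exists w; split.
  by rewrite tmulE !monoE eqxx; apply: leq_trans (leq_addr _ _).
move=> i Hi; rewrite tmulE !monoE Hz //.
have -> : (i == w) = false by apply/negP => /eqP E; rewrite E ltnn in Hi.
have -> : (i == ord0) = false by apply/negP => /eqP E; rewrite E in Hi.
done.
Qed.

Lemma in_L_of_dvd n (L : monset n) (a b : term n) :
  is_monideal L -> L a -> tdvd a b -> L b.
Proof. by move=> Hid Ha Hab; exact: Hid Hab Ha. Qed.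

Lemma notin_prev n (L : monset n) (a : term n) :
  is_monideal L -> ~ L a -> ~ in_gen_prev L a.
Proof. by move=> Hid Hn [b [Hb [_ Hba]]]; apply: Hn; exact: Hid Hba Hb. Qed.

Lemma topnotin n (L : monset n) (tau : term n) (w : 'I_n.+1) :
  is_monideal L -> mingen L tau -> (1 < tdeg tau)%N -> (0 < tau w)%N -> ~ L (mono w 1).
Proof.
move=> Hid Hm Hd Hw Hl.
have E := mingen_dvd_eq Hid Hm Hl (mono_dvd Hw).
by move: Hd; rewrite -E tdeg_mono.
Qed.

Lemma tops_eq n (L : monset n) :
  segment_ideal (@lex_lt n) L -> saturated L ->
  forall (tau sigma : term n) (w w' : 'I_n.+1),
  mingen L tau -> mingen L sigma -> (1 < tdeg tau)%N -> (1 < tdeg sigma)%N ->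
  (0 < tau w)%N -> (forall i : 'I_n.+1, (w < i)%N -> tau i = 0%N) ->
  (0 < sigma w')%N -> (forall i : 'I_n.+1, (w' < i)%N -> sigma i = 0%N) -> w = w'.
Proof.
move=> Hs Hsat tau sigma w w' Ht Hsg Hdt Hds Hw Htw Hw' Hsw.
have Hid := seg_id Hs.
case: (ltngtP w w') => [H|H|/val_inj //].
- exfalso; apply: (topnotin Hid Hsg Hds Hw').
  exact: (F1 Hs Hsat (mu := tau) (w := w) (j := w') Ht.1 (ltnW Hdt) Htw H).
- exfalso; apply: (topnotin Hid Ht Hdt Hw).
  exact: (F1 Hs Hsat (mu := sigma) (w := w') (j := w) Hsg.1 (ltnW Hds) Hsw H).
Qed.

Lemma bot_le_top n (tau : term n) (v w : 'I_n.+1) :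
  (0 < tau w)%N -> (forall i : 'I_n.+1, (i < v)%N -> tau i = 0%N) -> (v <= w)%N.
Proof.
move=> Hw Hb; rewrite leqNgt; apply/negP => /Hb E; by rewrite E in Hw.
Qed.

Lemma PP n (L : monset n) (tau sigma : term n) (W : 'I_n.+1) :
  is_monideal L -> mingen L tau -> mingen L sigma ->
  (forall i : 'I_n.+1, (W < i)%N -> tau i = 0%N) ->
  (forall i : 'I_n.+1, (i < W)%N -> tau i = 0%N) ->
  (forall i : 'I_n.+1, (W < i)%N -> sigma i = 0%N) ->
  (forall i : 'I_n.+1, (i < W)%N -> sigma i = 0%N) -> tau = sigma.
Proof.
move=> Hid Ht Hsg T1 T2 S1 S2.
have Z : forall (a : term n) i, (forall i : 'I_n.+1, (W < i)%N -> a i = 0%N) ->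
   (forall i : 'I_n.+1, (i < W)%N -> a i = 0%N) -> i != W -> a i = 0%N.
  move=> a i H1 H2 Hi; case: (ltngtP i W) => [/H2 //|/H1 //|/val_inj E].
  by rewrite E eqxx in Hi.
case: (leqP (tau W) (sigma W)) => H.
- apply: (mingen_dvd_eq Hid Hsg Ht.1) => i.
  case: (eqVneq i W) => [-> //|Hi]; by rewrite (Z tau).
- apply/esym; apply: (mingen_dvd_eq Hid Ht Hsg.1) => i.
  case: (eqVneq i W) => [->|Hi]; [exact: ltnW|by rewrite (Z sigma)].
Qed.

Lemma MM n (L : monset n) :
  segment_ideal (@lex_lt n) L -> saturated L ->
  forall (tau sigma : term n) (W v v' : 'I_n.+1),
  mingen L tau -> mingen L sigma ->
  (forall i : 'I_n.+1, (W < i)%N -> tau i = 0%N) ->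
  (forall i : 'I_n.+1, (i < v)%N -> tau i = 0%N) -> (0 < tau v)%N ->
  (forall i : 'I_n.+1, (W < i)%N -> sigma i = 0%N) ->
  (forall i : 'I_n.+1, (i < v')%N -> sigma i = 0%N) -> (0 < sigma v')%N ->
  v.+1 = W -> v'.+1 = W -> tau = sigma.
Proof.
move=> Hs Hsat tau sigma W v v' Ht Hsg T1 T2 Tv S1 S2 Sv Ev Ev'.
have Hid := seg_id Hs.
have Evv : v' = v by apply: val_inj; apply: succn_inj; rewrite Ev Ev'.
subst v'.
have HvW : v != W by apply/negP => /eqP E; move: Ev; rewrite E => /eqP; rewrite eqn_leq ltnn.
have Z : forall (a : term n) i, (forall i : 'I_n.+1, (W < i)%N -> a i = 0%N) ->
   (forall i : 'I_n.+1, (i < v)%N -> a i = 0%N) -> i != W -> i != v -> a i = 0%N.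
  move=> a i H1 H2 Hi Hi2; case: (ltngtP i v) => [/H2 //|H|/val_inj E]; last first.
    by rewrite E eqxx in Hi2.
  case: (ltngtP i W) => [H'|/H1 //|/val_inj E]; last by rewrite E eqxx in Hi.
  by move: H'; rewrite -Ev ltnS leqNgt H.
have key : forall (a b : term n), mingen L a -> mingen L b ->
   (forall i : 'I_n.+1, (W < i)%N -> a i = 0%N) -> (0 < a v)%N ->
   (0 < b v)%N -> (b W <= a W)%N.
  move=> a b Ha Hb A1 Av Bv; rewrite leqNgt; apply/negP => Hlt.
  have HL := shiftX Hs Hsat Ha.1 A1 HvW Av.
  have Hdv : tdvd (mono W (a W).+1) b by move=> i; rewrite monoE; case: eqP => [->|_] //.
  have E := mingen_dvd_eq Hid Hb HL Hdv.
  by move: Bv; rewrite -E monoE (negPf HvW).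
have EW : tau W = sigma W by apply/eqP; rewrite eqn_leq !key.
case: (leqP (tau v) (sigma v)) => H.
- apply: (mingen_dvd_eq Hid Hsg Ht.1) => i.
  case: (eqVneq i W) => [->|Hi]; first by rewrite EW.
  case: (eqVneq i v) => [-> //|Hi2]; by rewrite (Z tau).
- apply/esym; apply: (mingen_dvd_eq Hid Ht Hsg.1) => i.
  case: (eqVneq i W) => [->|Hi]; first by rewrite EW.
  case: (eqVneq i v) => [->|Hi2]; [exact: ltnW|by rewrite (Z sigma)].
Qed.

Definition gs_clause n (L : monset n) : Prop :=
  forall (s : nat) (tau tau' : term n),
     mingen L tau -> tdeg tau = s -> tdeg tau' = s ->
     ~ in_gen_prev L tau' -> revlex_lt tau tau' -> mingen L tau'.

Lemma Ofail n (L : monset n) :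
  segment_ideal (@lex_lt n) L -> saturated L -> gs_clause L ->
  forall (tau : term n) (W v : 'I_n.+1),
  mingen L tau -> (1 < tdeg tau)%N ->
  (0 < tau W)%N -> (forall i : 'I_n.+1, (W < i)%N -> tau i = 0%N) ->
  (0 < tau v)%N -> (forall i : 'I_n.+1, (i < v)%N -> tau i = 0%N) ->
  (v.+2 <= W)%N -> False.
Proof.
move=> Hs Hsat Hcl tau W v Ht Hd TW T1 Tv T2 HvW.
have Hid := seg_id Hs.
pose W' : 'I_n.+1 := inord W.-1.
have HW' : nat_of_ord W' = W.-1 by rewrite /W' inordK // (leq_ltn_trans (leq_pred _) (ltn_ord W)).
have HW'W : (W' < W)%N by rewrite HW' prednK ?ltnSn // (leq_ltn_trans _ HvW).
have HvW' : (v < W')%N by rewrite HW' -ltnS prednK // (leq_ltn_trans _ HvW).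
pose tau' := mono W' (tdeg tau).
have Hn : ~ L tau'.
  move=> Hl; apply: (topnotin Hid Ht Hd TW).
  apply: (F1 Hs Hsat (mu := tau') (w := W') Hl).
  - by rewrite tdeg_mono (ltnW Hd).
  - move=> i Hi; rewrite monoE; case: eqP => // E; by rewrite E ltnn in Hi.
  - exact: HW'W.
have Hm : mingen L tau'.
  apply: (Hcl (tdeg tau) tau tau' Ht erefl (tdeg_mono _ _) (notin_prev Hid Hn)).
  exists v; split.
    rewrite monoE; case: eqP => // E; by rewrite E ltnn in HvW'.
  move=> i Hi; rewrite T2 // monoE; case: eqP => // E.
  by move: (ltn_trans Hi HvW'); rewrite E ltnn.
exact: Hn Hm.1.
Qed.

Lemma forward n (L : monset n) :
  segment_ideal (@lex_lt n) L -> saturated L -> gs_clause L ->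
  at_most_two_mingens_deg_gt1 L.
Proof.
move=> Hs Hsat Hcl [a [b [c [Ha Hb Hc [Da [Db Dc]] [Nab [Nac Nbc]]]]]].
have Hid := seg_id Hs.
have [wa [Pa Za]] := top_exists (ltnW Da).
have [wb [Pb Zb]] := top_exists (ltnW Db).
have [wc [Pc Zc]] := top_exists (ltnW Dc).
have [va [Qa Ya]] := bot_exists (ltnW Da).
have [vb [Qb Yb]] := bot_exists (ltnW Db).
have [vc [Qc Yc]] := bot_exists (ltnW Dc).
have Eab := tops_eq Hs Hsat Ha Hb Da Db Pa Za Pb Zb.
have Eac := tops_eq Hs Hsat Ha Hc Da Dc Pa Za Pc Zc.
subst wb wc.
have typ : forall (t : term n) (v : 'I_n.+1), (0 < t wa)%N ->
   (forall i : 'I_n.+1, (i < v)%N -> t i = 0%N) ->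
   [\/ v = wa, v.+1 = wa :> nat | (v.+2 <= wa)%N].
  move=> t v Pt Yt; have := bot_le_top Pt Yt.
  rewrite leq_eqVlt => /orP [/eqP E|]; first by constructor 1; apply: val_inj.
  rewrite leq_eqVlt => /orP [/eqP E|H]; [by constructor 2|by constructor 3].
have O := Ofail Hs Hsat Hcl.
have pairP : forall (x y : term n) (vx vy : 'I_n.+1), mingen L x -> mingen L y ->
   (forall i : 'I_n.+1, (wa < i)%N -> x i = 0%N) ->
   (forall i : 'I_n.+1, (i < vx)%N -> x i = 0%N) ->
   (forall i : 'I_n.+1, (wa < i)%N -> y i = 0%N) ->
   (forall i : 'I_n.+1, (i < vy)%N -> y i = 0%N) -> vx = wa -> vy = wa -> x = y.
  move=> x y vx vy Hx Hy Zx Yx Zy Yy Ex Ey; subst vx vy; exact: PP Hid Hx Hy Zx Yx Zy Yy.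
have M := MM Hs Hsat.
case: (typ a va Pa Ya) => Ea; case: (typ b vb Pb Yb) => Eb; case: (typ c vc Pc Yc) => Ec;
first [ exact: (O a wa va Ha Da Pa Za Qa Ya Ea)
      | exact: (O b wa vb Hb Db Pb Zb Qb Yb Eb)
      | exact: (O c wa vc Hc Dc Pc Zc Qc Yc Ec)
      | (apply: Nab; exact: pairP Ha Hb Za Ya Zb Yb Ea Eb)
      | (apply: Nac; exact: pairP Ha Hc Za Ya Zc Yc Ea Ec)
      | (apply: Nbc; exact: pairP Hb Hc Zb Yb Zc Yc Eb Ec)
      | (apply: Nab; exact: M _ _ _ _ _ Ha Hb Za Ya Qa Zb Yb Qb Ea Eb)
      | (apply: Nac; exact: M _ _ _ _ _ Ha Hc Za Ya Qa Zc Yc Qc Ea Ec)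
      | (apply: Nbc; exact: M _ _ _ _ _ Hb Hc Zb Yb Qb Zc Yc Qc Eb Ec) ].
Qed.

Lemma lex_mono_top n (L : monset n) :
  segment_ideal (@lex_lt n) L ->
  forall (tau : term n) (w v : 'I_n.+1), L tau -> v != w -> (0 < tau v)%N ->
  (forall i : 'I_n.+1, (w < i)%N -> tau i = 0%N) -> L (mono w (tdeg tau)).
Proof.
move=> [Hid Hseg] tau w v Ht Hvw Hv Z; apply: (Hseg tau) => //; first by rewrite tdeg_mono.
exists w; split.
  rewrite monoE eqxx; apply: leq_trans (tdeg_le2 tau (_ : w != v)); last by rewrite eq_sym.
  by rewrite -addn1 leq_add2l.
move=> i Hi; rewrite Z // monoE; case: eqP => // E; by rewrite E ltnn in Hi.
Qed.

Lemma claimB n (L : monset n) :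
  segment_ideal (@lex_lt n) L -> saturated L ->
  at_most_two_mingens_deg_gt1 L -> gs_clause L.
Proof.
move=> Hs Hsat H2 s tau tau' Ht Hdt Hdt' Hnp Hrev; split => //.
have Hid := seg_id Hs.
apply: NNPP => Hn.
case: (posnP (tdeg tau)) => Hd0.
  apply: Hn; apply: (Hid tau) Ht.1 => i; by rewrite (deg0 Hd0).
have [w [Pw Zw]] := top_exists Hd0.
have [v [Pv Yv]] := bot_exists Hd0.
case: Hrev => h [Hh Hag].
have [i [Hhi Hi]] := deg_exists (etrans Hdt (esym Hdt')) Hag Hh.
have Hiw : (i <= w)%N.
  rewrite leqNgt; apply/negP => Hwi; apply: Hn.
  apply: (Hid (mono i 1)); first exact: mono_dvd (leq_ltn_trans _ Hi).
  exact: (F1 Hs Hsat (mu := tau) (w := w) Ht.1 Hd0 Zw Hwi).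
have Hvh : (v <= h)%N.
  rewrite leqNgt; apply/negP => /Yv E; by rewrite E in Hh.
case: (leqP v.+2 w) => Hvw; last first.
  have Eiw : i = w.
    apply: val_inj; apply/eqP; rewrite eqn_leq Hiw /=.
    by apply: leq_trans (_ : (h < i)%N) => //; rewrite -ltnS (leq_trans Hvw) // ltnS.
  subst i.
  have Hvw' : v != w by apply/negP => /eqP E; move: (leq_ltn_trans Hvh Hhi); rewrite E ltnn.
  have HL := shiftX Hs Hsat Ht.1 Zw Hvw' Pv.
  apply: Hn; apply: (Hid _ _ _ HL) => k; rewrite monoE; case: eqP => [->|] //.
exfalso.
have Hvw0 : v != w by apply/negP => /eqP E; move: Hvw; rewrite E ltnNge leqnSn.
have Lxw := lex_mono_top Hs Ht.1 Hvw0 Pv Zw.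
have [g1 [Hg1 Dg1]] := mingen_exists Lxw.
pose W1 : 'I_n.+1 := inord w.-1.
have HW1 : nat_of_ord W1 = w.-1 by rewrite /W1 inordK // (leq_ltn_trans (leq_pred _) (ltn_ord w)).
have HW1w : (W1 < w)%N by rewrite HW1 prednK ?ltnSn // (leq_ltn_trans _ Hvw).
have HvW1 : (v < W1)%N by rewrite HW1 -ltnS prednK // (leq_ltn_trans _ Hvw).
have nW1w : W1 != w by apply/negP => /eqP E; rewrite E ltnn in HW1w.
have nvW1 : v != W1 by apply/negP => /eqP E; rewrite E ltnn in HvW1.
have Htw : (tau w <= tdeg tau)%N by exact: tdeg_le1.
pose sigma := tmul (mono w (tau w)) (mono W1 (tdeg tau - tau w)).
have Lsig : L sigma.
  case: Hs => _ Hseg; apply: (Hseg tau) Ht.1 _.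
    by rewrite tdeg_tmul !tdeg_mono subnKC.
  exists W1; split.
    rewrite tmulE !monoE eqxx (negPf nW1w) add0n ltn_subRL.
    have a1 : w != W1 by rewrite eq_sym.
    have a2 : w != v by rewrite eq_sym.
    have a3 : W1 != v by rewrite eq_sym.
    apply: leq_trans (tdeg_le3 tau a1 a2 a3).
    by rewrite -addn1 leq_add2l.
  move=> k Hk; rewrite tmulE !monoE.
  have -> : (k == W1) = false by apply/negP => /eqP E; rewrite E ltnn in Hk.
  case: eqP => [->|/eqP Hkw]; first by rewrite addn0.
  rewrite Zw // ltn_neqAle eq_sym Hkw /=.
  have Hw0 : (0 < w)%N by apply: leq_ltn_trans _ Hvw.
  move: Hk; rewrite HW1; by case: (nat_of_ord w) Hw0.
have [g2 [Hg2 Dg2]] := mingen_exists Lsig.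
have Ddt : (1 < tdeg tau)%N.
  apply: leq_trans (tdeg_le2 tau Hvw0); by rewrite -(addn1 1) leq_add.
have big : forall g : term n, mingen L g -> g v = 0%N ->
    (forall k, (0 < g k)%N -> k = w \/ k = W1) -> (1 < tdeg g)%N.
  move=> g Hg Gv Gs; case: (ltngtP (tdeg g) 1) => // Hgd.
  - have E : g = tau.
      apply: (mingen_dvd_eq Hid Ht Hg.1) => k; move: Hgd; rewrite ltnS leqn0 => /eqP.
      by move/deg0 ->.
    by move: Pv; rewrite -E Gv.
  - have Hpos : (0 < tdeg g)%N by rewrite Hgd.
    have [k Hk] := exists_pos Hpos.
    have Lk : L (mono k 1).
      apply: (Hid g) Hg.1 => j; rewrite monoE; case: eqP => [->|/eqP Hjk].
        by rewrite -Hgd tdeg_le1.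
      have := tdeg_le2 g Hjk; rewrite Hgd => H.
      by move: (leq_trans (leq_add (leqnn (g j)) Hk) H); rewrite addn1 ltnS leqn0 => /eqP ->.
    exfalso; case: (Gs k Hk) => Ek; subst k.
      exact: (topnotin Hid Ht Ddt Pw Lk).
    apply: (topnotin Hid Ht Ddt Pw).
    apply: (F1 Hs Hsat (mu := mono W1 1) (w := W1) Lk); first by rewrite tdeg_mono.
      move=> j Hj; rewrite monoE; case: eqP => // E; by rewrite E ltnn in Hj.
    exact: HW1w.
have G1s : forall k, (0 < g1 k)%N -> k = w.
  move=> k Hk; move: (leq_trans Hk (Dg1 k)); rewrite monoE; by case: eqP.
have G2s : forall k, (0 < g2 k)%N -> k = w \/ k = W1.
  move=> k Hk; move: (leq_trans Hk (Dg2 k)); rewrite tmulE !monoE.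
  case: eqP => [->|_]; first by left.
  case: eqP => [->|_]; by [right|].
have G1v : g1 v = 0%N.
  apply/eqP; rewrite -leqn0 leqNgt; apply/negP => /G1s E; by rewrite E eqxx in Hvw0.
have G2v : g2 v = 0%N.
  apply/eqP; rewrite -leqn0 leqNgt; apply/negP => /G2s [] E.
    by rewrite E eqxx in Hvw0.
  by rewrite E eqxx in nvW1.
apply: H2; exists g1, g2, tau; split => //.
  split; [apply: big => // k /G1s ->; by left|split; [exact: big|exact: Ddt]].
split; [|split].
- move=> E; apply/negP: Hvw0; apply/negPn; subst g2.
  have E2 : g1 = tau.
    apply: (mingen_dvd_eq Hid Ht Hg1.1) => k.
    case: (posnP (g1 k)) => [-> //|/G1s Ek]; subst k.
    by move: (Dg2 w); rewrite tmulE !monoE eqxx (negPf (_ : w != W1)) ?addn0 // eq_sym.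
  by move: Pv; rewrite -E2 G1v.
- move=> E; by move: Pv; rewrite -E G1v.
- move=> E; by move: Pv; rewrite -E G2v.
Qed.

Lemma claimA n (L : monset n) :
  segment_ideal (@lex_lt n) L -> saturated L ->
  forall mu : term n, L mu -> (forall i : 'I_n.+1, (2 < i)%N -> mu i = 0%N) ->
  gs_clause L.
Proof.
move=> Hs Hsat mu Hmu Zmu s tau tau' Ht Hdt Hdt' Hnp Hrev; split => //.
have Hid := seg_id Hs.
apply: NNPP => Hn.
case: (posnP (tdeg mu)) => Hm0.
  apply: Hn; apply: (Hid mu) Hmu => i; by rewrite (deg0 Hm0).
have Lj : forall j : 'I_n.+1, (2 < j)%N -> L (mono j 1).
  move=> j Hj; exact: (F1 Hs Hsat (mu := mu) (w := 2) Hmu Hm0 Zmu Hj).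
have Z' : forall j : 'I_n.+1, (2 < j)%N -> tau' j = 0%N.
  move=> j Hj; apply/eqP; rewrite -leqn0 leqNgt; apply/negP => Hp; apply: Hn.
  exact: (Hid _ _ (mono_dvd Hp) (Lj j Hj)).
case: Hrev => h [Hh Hag].
have [i [Hhi Hi]] := deg_exists (etrans Hdt (esym Hdt')) Hag Hh.
have Hi2 : (i <= 2)%N.
  rewrite leqNgt; apply/negP => /Z' E; by rewrite E in Hi.
have Hh0 : (0 < h)%N.
  rewrite lt0n; apply/negP => /eqP E.
  have Eh : h = ord0 by apply: val_inj.
  by move: Hh; rewrite Eh (mingen_x0 Hs Hsat Ht).
have Hseg := Hs.2.
apply: Hn; apply: (Hseg tau) Ht.1 _; first by rewrite Hdt Hdt'.
exists i; split => // j Hj.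
have Hj2 : (2 < j)%N by apply: leq_trans Hj; exact: (leq_ltn_trans Hh0 Hhi).
rewrite Z' //; apply/eqP; rewrite -leqn0 leqNgt; apply/negP => Hp.
have E := mingen_dvd_eq Hid Ht (Lj j Hj2) (mono_dvd Hp).
move: Hh; rewrite -E monoE.
have -> : (h == j) = false.
  apply/negP => /eqP Ehj; move: (ltn_trans Hhi Hj); by rewrite Ehj ltnn.
done.
Qed.

Lemma tdeg_incr n (b : term n) i : tdeg (incr b i) = (tdeg b).+1.
Proof.
rewrite /tdeg (bigD1 i) //= [in RHS](bigD1 i) //= ffunE eqxx -addSn.
congr (_ + _)%N; apply: eq_bigr => k /negPf Hk; by rewrite ffunE Hk.
Qed.

Lemma borel_of_lex n (L : monset n) :
  segment_ideal (@lex_lt n) L -> borel L.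
Proof.
move=> [Hid Hseg] a i j Ha Hj Hji; apply: (Hseg a) Ha _.
  by rewrite tdeg_incr tdeg_decr.
have Hij : (i == j) = false by apply/negP => /eqP E; rewrite E ltnn in Hji.
exists i; split.
  by rewrite !ffunE eqxx Hij.
move=> k Hk; rewrite !ffunE.
have -> : (k == i) = false by apply/negP => /eqP E; rewrite E ltnn in Hk.
have -> : (k == j) = false by apply/negP => /eqP E; move: (ltn_trans Hji Hk); rewrite E ltnn.
done.
Qed.

Lemma hilb_lb n (L : monset n) (m r t : nat) :
  (m <= n)%N ->
  (forall a, L a -> exists i : 'I_n.+1, (m < i)%N /\ (0 < a i)%N) ->
  (n.+1 * r <= t)%N -> (r ^ m <= hilbf L t)%N.
Proof.
move=> Hmn Hno Hrt.
pose a (e : {ffun 'I_m -> 'I_r}) : term n :=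
  [ffun i : 'I_n.+1 => if i == ord0 then 0%N
                       else oapp (fun j : 'I_m => nat_of_ord (e j)) 0%N (insub (i.-1))].
have aE : forall e i, a e i = if i == ord0 then 0%N
                       else oapp (fun j : 'I_m => nat_of_ord (e j)) 0%N (insub (i.-1)).
  by move=> e i; rewrite ffunE.
have ale : forall e i, (a e i <= r)%N.
  move=> e i; rewrite aE; case: (i == ord0) => //.
  case: insubP => [j _ _|_] //=; exact: ltnW.
have adeg : forall e, (tdeg (a e) <= t)%N.
  move=> e; apply: (leq_trans _ Hrt); rewrite /tdeg.
  rewrite -[X in (_ <= X * r)%N](card_ord n.+1) -sum_nat_const.
  by apply: leq_sum => i _; exact: ale.
pose b e : term n := tmul (a e) (mono ord0 (t - tdeg (a e))).
have bdeg : forall e, tdeg (b e) = t.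
  by move=> e; rewrite tdeg_tmul tdeg_mono subnKC.
have ble : forall e i, (b e i < t.+1)%N.
  by move=> e i; rewrite ltnS -(bdeg e) tdeg_le1.
pose c e : {ffun 'I_n.+1 -> 'I_t.+1} := [ffun i => inord (b e i)].
have cE : forall e, [ffun i => nat_of_ord (c e i)] = b e.
  move=> e; apply/ffunP => i; have H := ble e i; rewrite !ffunE inordK //; move: H; by rewrite !ffunE.
have cinj : injective c.
  move=> e1 e2 Hc; apply/ffunP => j.
  have Hj : (j.+1 < n.+1)%N by rewrite ltnS (leq_trans (ltn_ord j) Hmn).
  pose k : 'I_n.+1 := Ordinal Hj.
  have bk : forall e, b e k = nat_of_ord (e j).
    move=> e; rewrite tmulE monoE aE.
    have Hk0 : (k == ord0) = false by [].
    rewrite Hk0 addn0; case: insubP => [j' _ Ej'|]; last by rewrite /= ltn_ord.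
    by have -> : j' = j by apply: val_inj.
  have : b e1 k = b e2 k by rewrite -(cE e1) -(cE e2) Hc.
  rewrite !bk => E; exact: val_inj E.
have Hsub : [set c e | e in [set: {ffun 'I_m -> 'I_r}]] \subset
   [set a0 : {ffun 'I_n.+1 -> 'I_t.+1} |
      ((\sum_i (a0 i : nat)) == t) && ~~ L [ffun i => (a0 i : nat)]].
  apply/subsetP => x /imsetP [e _ ->]; rewrite inE cE.
  apply/andP; split.
    apply/eqP; transitivity (tdeg (b e)); last exact: bdeg e.
    rewrite /tdeg; apply: eq_bigr => i _; by rewrite -(cE e) [in RHS]ffunE.
  apply/negP => /Hno [i [Hi Hp]]; move: Hp; rewrite tmulE monoE aE.
  have -> : (i == ord0) = false by apply/negP => /eqP E; rewrite E in Hi.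
  rewrite addn0; case: insubP => [j _ Ej|] //=.
  by move: (ltn_ord j); rewrite Ej ltnNge -ltnS prednK ?Hi // (leq_ltn_trans _ Hi).
rewrite /hilbf; apply: leq_trans (subset_leq_card Hsub).
by rewrite card_imset // cardsT card_ffun !card_ord.
Qed.

Lemma poly_ub (P : {poly rat}) (m : nat) (x : rat) :
  (size P <= m)%N -> (1 <= x)%R ->
  (P.[x] <= (\sum_(i < m) `|P`_i|) * x ^+ m.-1)%R.
Proof.
move=> Hs Hx.
have Hx0 : (0 <= x)%R by apply: le_trans Hx; exact: ler01.
rewrite (horner_coef_wide x Hs) mulr_suml.
apply: (le_trans (ler_norm _)).
apply: (le_trans (ler_norm_sum _ _ _)).
apply: ler_sum => i _; rewrite normrM normrX (ger0_norm Hx0).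
apply: ler_wpM2l; first exact: normr_ge0.
apply: ler_weXn2l => //; by rewrite -ltnS prednK // (leq_ltn_trans _ (ltn_ord i)).
Qed.

Lemma growth n (L : monset n) (P : {poly rat}) (m : nat) :
  hilbpoly L P -> (size P <= m)%N -> (m <= n)%N ->
  (forall a, L a -> exists i : 'I_n.+1, (m < i)%N /\ (0 < a i)%N) -> False.
Proof.
move=> [t0 Ht0] Hs Hmn Hno.
pose C := (\sum_(i < m) `|P`_i|)%R.
have C0 : (0 <= C)%R by apply: sumr_ge0 => i _; exact: normr_ge0.
pose K := (C * ((n.+2)%:R) ^+ m.-1)%R.
have K0 : (0 <= K)%R by apply: mulr_ge0 => //; apply: exprn_ge0; exact: ler0n.
pose r := maxn (Num.Def.archi_bound K) t0.+1.
have Hr1 : (0 < r)%N by rewrite leq_max orbT.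
have Hrt0 : (t0 <= r)%N by rewrite leq_max; apply/orP; right; exact: leqnSn.
have HKr : (K < r%:R)%R.
  apply: (lt_le_trans (archi_boundP K0)); by rewrite ler_nat leq_max leqnn.
pose t := (n.+1 * r + t0)%N.
have Ht : (t0 <= t)%N by exact: leq_addl.
have Hlb := hilb_lb (r := r) Hmn Hno (leq_addr t0 _ : (n.+1 * r <= t)%N).
have Heq := Ht0 t Ht.
have Ht1 : (1 <= t)%N by apply: (leq_trans Hr1); rewrite /t; apply: leq_trans (leq_addr _ _); exact: leq_pmull.
have Ht1' : (1 <= t%:R :> rat)%R by rewrite ler1n.
have Hub := poly_ub Hs Ht1'.
have Httr : (t <= n.+2 * r)%N by rewrite /t mulSn addnC leq_add2r.
have Hmain : ((r ^ m)%:R <= K * (r%:R) ^+ m.-1 :> rat)%R.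
  apply: (le_trans (_ : _ <= (hilbf L t)%:R)%R); first by rewrite ler_nat.
  rewrite -Heq; apply: (le_trans Hub).
  rewrite /K -mulrA ler_wpM2l // -exprMn -natrM.
  apply: lerXn2r; [exact: ler0n|exact: ler0n|by rewrite ler_nat].
case: (posnP m) => Hm.
  have EC : C = 0%R by rewrite /C Hm big_ord0.
  by move: Hmain; rewrite /K EC !mul0r Hm expn0 ler10.
move: Hmain; rewrite natrX -{1}(prednK Hm) exprS ler_pM2r ?exprn_gt0 ?ltr0n //.
by rewrite leNgt HKr.
Qed.

Theorem mainTheorem9 (n : nat) (L : monset n) (P : {poly rat}) :
  segment_ideal (@lex_lt n) L -> saturated L ->
  hilbpoly L P -> (size P <= n)%N ->
  (gen_segment (@revlex_lt n) L <->
   ((size P <= 2)%N \/ at_most_two_mingens_deg_gt1 L)).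
Proof.
move=> Hs Hsat Hh HPn; split.
  case=> Hid Hnz Hsat' Hb Hcl; right; exact: (forward Hs Hsat Hcl).
move=> Hr.
have Hnz : nonzero_ideal L.
  apply: NNPP => H; apply: (growth Hh HPn (leqnn n)) => a Ha.
  by exfalso; apply: H; exists a.
split => //; [exact: Hs.1|exact: borel_of_lex Hs|].
case: Hr => [H2|Hat]; last exact: claimB.
have [mu [Hmu Zmu]] : exists mu, L mu /\ forall i : 'I_n.+1, (minn 2 n < i)%N -> mu i = 0%N.
  apply: NNPP => H; apply: (growth Hh (m := minn 2 n)).
  - by rewrite leq_min H2 HPn.
  - exact: geq_minr.
  move=> a Ha; apply: NNPP => H'; apply: H; exists a; split => // i Hi.
  apply/eqP; rewrite -leqn0 leqNgt; apply/negP => Hp; apply: H'; by exists i.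
apply: (claimA Hs Hsat Hmu) => i Hi; apply: Zmu.
exact: leq_ltn_trans (geq_minl 2 n) Hi.
Qed.
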